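(* Let $\Gamma$ be a group and $S$ a $\Gamma$-graded regular semigroup. Then the map $I\mapsto I_\varepsilon:=S_\varepsilon\cap I$ is a one-to-one, inclusion-preserving correspondence between the left ideals of $S$ and the left ideals of $S_\varepsilon$ (with inverse $J\mapsto SJ$); likewise for right ideals.
   Context: Semigroups have a zero; $S$ is $\Gamma$-graded via $\deg:S\setminus\{0\}\to\Gamma$ with $\deg(st)=\deg(s)\deg(t)$ whenever $st\neq0$; $S_\alpha=\deg^{-1}(\alpha)\cup\{0\}$, $\varepsilon$ the identity of $\Gamma$. $S$ is regular if every $s$ has $t$ with $sts=s$. *)

(* Defs.v *)
Set Implicit Arguments.

Definition is_semigroup0 (T : Type) (mul : T -> T -> T) (z : T) : Prop :=
  (forall a b c, mul a (mul b c) = mul (mul a b) c) /\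
  (forall a, mul z a = z) /\ (forall a, mul a z = z).

Definition is_group (G : Type) (gm : G -> G -> G) (e : G) (gi : G -> G) : Prop :=
  (forall a b c, gm a (gm b c) = gm (gm a b) c) /\
  (forall a, gm e a = a) /\ (forall a, gm a e = a) /\
  (forall a, gm (gi a) a = e) /\ (forall a, gm a (gi a) = e).

(* Gamma-grading: deg is only meaningful on S \ {0}; deg(st) = deg s deg t when st <> 0. *)
Definition graded (T G : Type) (mul : T -> T -> T) (z : T) (gm : G -> G -> G)
  (deg : T -> G) : Prop :=
  forall s t, s <> z -> t <> z -> mul s t <> z -> deg (mul s t) = gm (deg s) (deg t).

Definition component (T G : Type) (z : T) (deg : T -> G) (a : G) : T -> Prop :=
  fun s => s = z \/ (s <> z /\ deg s = a).

Definition regular (T : Type) (mul : T -> T -> T) : Prop :=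
  forall s, exists t, mul (mul s t) s = s.

Definition full (T : Type) : T -> Prop := fun _ => True.

Definition subset (T : Type) (A B : T -> Prop) : Prop := forall x, A x -> B x.
Definition set_eq (T : Type) (A B : T -> Prop) : Prop := forall x, A x <-> B x.
Definition inter (T : Type) (A B : T -> Prop) : T -> Prop := fun x => A x /\ B x.

(* Left / right ideals of the subsemigroup A (A = full for S itself):
   nonempty subsets I of A with A I ⊆ I (resp. I A ⊆ I). *)
Definition left_ideal (T : Type) (mul : T -> T -> T) (A I : T -> Prop) : Prop :=
  (exists x, I x) /\ subset I A /\ (forall s x, A s -> I x -> I (mul s x)).
Definition right_ideal (T : Type) (mul : T -> T -> T) (A I : T -> Prop) : Prop :=
  (exists x, I x) /\ subset I A /\ (forall s x, A s -> I x -> I (mul x s)).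

Definition lprod (T : Type) (mul : T -> T -> T) (J : T -> Prop) : T -> Prop :=
  fun x => exists s t, J t /\ x = mul s t.
Definition rprod (T : Type) (mul : T -> T -> T) (J : T -> Prop) : T -> Prop :=
  fun x => exists s t, J t /\ x = mul t s.

(* Main.v *)
Require Import Defs.
From Stdlib Require Import Classical.

Section L.
Variables (T : Type) (mul : T -> T -> T) (z : T)
  (G : Type) (gm : G -> G -> G) (e : G) (gi : G -> G) (deg : T -> G).
Hypotheses (HS : is_semigroup0 mul z) (HG : is_group gm e gi)
  (Hgr : graded mul z gm deg) (Hreg : regular mul).

Let Se := component z deg e.

Lemma gcancel a b : a = gm a b -> b = e.
Proof.
  destruct HG as (A & L & R & V & W). intro H.
  assert (gm (gi a) a = gm (gi a) (gm a b)) by (rewrite <- H; auto).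
  rewrite A, V, L in H0. congruence.
Qed.

Lemma gid a : e = gm a e -> a = e.
Proof. destruct HG as (A & L & R & V & W). rewrite R. auto. Qed.

Lemma gee : gm e e = e.
Proof. destruct HG as (A & L & R & V & W). auto. Qed.

Lemma Se_mul s x : Se s -> Se x -> Se (mul s x).
Proof.
  destruct HS as (A & Zl & Zr).
  intros Hs Hx. destruct (classic (mul s x = z)) as [E|E]; [left; auto|right; split; auto].
  destruct Hs as [->|[Hs Ds]]; [rewrite Zl in E; tauto|].
  destruct Hx as [->|[Hx Dx]]; [rewrite Zr in E; tauto|].
  rewrite Hgr by auto. rewrite Ds, Dx. apply gee.
Qed.

Lemma z_in_left A I : (forall s, A s -> A z) -> left_ideal mul A I -> I z.
Proof.
  destruct HS as (As & Zl & Zr).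
  intros HA (( x & Hx) & Hsub & Hcl).
  rewrite <- (Zl x). apply Hcl; auto. apply (HA x); auto.
Qed.

Lemma part1 I : left_ideal mul (@full T) I ->
      left_ideal mul Se (inter Se I) /\ set_eq (lprod mul (inter Se I)) I.
Proof.
  destruct HS as (As & Zl & Zr).
  intro HI. pose proof (@z_in_left (@full T) I (fun _ _ => Logic.I) HI) as Iz.
  destruct HI as (Hne & Hsub & Hcl).
  split.
  - split; [exists z; split; auto; left; auto|split].
    + intros x [? ?]; auto.
    + intros s x Hs [Hx Ix]. split; [apply Se_mul; auto|apply Hcl; auto; exact Logic.I].
  - intro x; split.
    + intros (s & t & [_ It] & ->). apply Hcl; auto; exact Logic.I.
    + intro Ix. destruct (Hreg x) as [t Ht].
      destruct (classic (x = z)) as [->|Hxz].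
      { exists z, z. split; [split; auto; left; auto|auto]. }
      exists x, (mul t x). rewrite As. split; auto.
      split; [|apply Hcl; auto; exact Logic.I].
      assert (Htx : mul t x <> z).
      { intro E. apply Hxz. rewrite <- Ht, <- As, E, Zr. auto. }
      right; split; auto.
      apply (gcancel (deg x)). rewrite <- Hgr by (auto; rewrite As, Ht; auto).
      rewrite As, Ht. auto.
Qed.

Lemma part2 J : left_ideal mul Se J ->
      left_ideal mul (@full T) (lprod mul J) /\ set_eq (inter Se (lprod mul J)) J.
Proof.
  destruct HS as (As & Zl & Zr).
  intro HJ. assert (Jz : J z).
  { apply (@z_in_left Se J); auto. intros; left; auto. }
  destruct HJ as ((j & Hj) & Hsub & Hcl).
  split.
  - split; [exists (mul z j), z, j; auto|split; [intros ? ?; exact I|]].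
    intros s x _ (a & t & Jt & ->). exists (mul s a), t. rewrite As. auto.
  - intro x; split.
    + intros [Hx (s & t & Jt & ->)].
      destruct (classic (mul s t = z)) as [E|E]; [rewrite E; auto|].
      destruct Hx as [Hx|[_ Dx]]; [tauto|].
      assert (Hs : s <> z) by (intros ->; rewrite Zl in E; tauto).
      assert (Ht : t <> z) by (intros ->; rewrite Zr in E; tauto).
      apply Hcl; auto.
      rewrite Hgr in Dx by auto.
      destruct (Hsub t Jt) as [|[_ Dt]]; [tauto|].
      rewrite Dt in Dx. right; split; auto. apply gid; auto.
    + intro Jx. split; [apply Hsub; auto|].
      destruct (Hreg x) as [y Hy]. exists (mul x y), x. auto.
Qed.

Lemma left_all :
  ((forall I, left_ideal mul (@full T) I ->
      left_ideal mul Se (inter Se I) /\ set_eq (lprod mul (inter Se I)) I) /\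
   (forall J, left_ideal mul Se J ->
      left_ideal mul (@full T) (lprod mul J) /\ set_eq (inter Se (lprod mul J)) J) /\
   (forall I I', left_ideal mul (@full T) I -> left_ideal mul (@full T) I' ->
      (subset I I' <-> subset (inter Se I) (inter Se I'))) /\
   (forall J J', left_ideal mul Se J -> left_ideal mul Se J' ->
      (subset J J' <-> subset (lprod mul J) (lprod mul J')))).
Proof.
  split; [exact part1|split; [exact part2|split]].
  - intros I I' H H'. destruct (part1 I H) as [_ E]. destruct (part1 I' H') as [_ E'].
    split.
    + intros S x [a b]. split; auto.
    + intros S x Ix. apply E'. apply E in Ix. destruct Ix as (s & t & Ht & ->).
      exists s, t. auto.
  - intros J J' H H'. destruct (part2 J H) as [_ E]. destruct (part2 J' H') as [_ E'].
    split.
    + intros S x (s & t & Ht & ->). exists s, t. auto.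
    + intros S x Jx. apply E'. apply E in Jx. destruct Jx as [a b]. split; auto.
Qed.
End L.

Theorem proposition2p7 (T : Type) (mul : T -> T -> T) (z : T)
  (G : Type) (gm : G -> G -> G) (e : G) (gi : G -> G) (deg : T -> G)
  (HS : is_semigroup0 mul z) (HG : is_group gm e gi)
  (Hgr : graded mul z gm deg) (Hreg : regular mul) :
  let Se := component z deg e in
  (* left ideals *)
  ((forall I, left_ideal mul (@full T) I ->
      left_ideal mul Se (inter Se I) /\ set_eq (lprod mul (inter Se I)) I) /\
   (forall J, left_ideal mul Se J ->
      left_ideal mul (@full T) (lprod mul J) /\ set_eq (inter Se (lprod mul J)) J) /\
   (forall I I', left_ideal mul (@full T) I -> left_ideal mul (@full T) I' ->
      (subset I I' <-> subset (inter Se I) (inter Se I'))) /\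
   (forall J J', left_ideal mul Se J -> left_ideal mul Se J' ->
      (subset J J' <-> subset (lprod mul J) (lprod mul J')))) /\
  (* right ideals *)
  ((forall I, right_ideal mul (@full T) I ->
      right_ideal mul Se (inter Se I) /\ set_eq (rprod mul (inter Se I)) I) /\
   (forall J, right_ideal mul Se J ->
      right_ideal mul (@full T) (rprod mul J) /\ set_eq (inter Se (rprod mul J)) J) /\
   (forall I I', right_ideal mul (@full T) I -> right_ideal mul (@full T) I' ->
      (subset I I' <-> subset (inter Se I) (inter Se I'))) /\
   (forall J J', right_ideal mul Se J -> right_ideal mul Se J' ->
      (subset J J' <-> subset (rprod mul J) (rprod mul J')))).
Proof.
  intro Se. split.
  - exact (@left_all T mul z G gm e gi deg HS HG Hgr Hreg).
  - refine (@left_all T (fun a b => mul b a) z G (fun a b => gm b a) e gi deg _ _ _ _).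
    + destruct HS as (A & L & R). split; [intros; symmetry; apply A|split; auto].
    + destruct HG as (A & L & R & V & W). split; [intros; symmetry; apply A|].
      repeat split; auto.
    + intros s t Hs Ht Hst. apply Hgr; auto.
    + intro s. destruct (Hreg s) as [t Ht]. exists t.
      destruct HS as (A & _ & _). rewrite A. exact Ht.
Qed.
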